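(* For all integers $q\ge2$ and $n\ge\delta\ge2$ there exists a code $\mathcal C\subseteq[q]^n$ with $$|\mathcal C|\ge\frac{\binom{n+q-1}{n}}{(2q+2)^{\delta-2}(2q+1)}$$ such that $d_I(\mathbf u,\mathbf v)\ge 2\delta$ for all distinct $\mathbf u,\mathbf v\in\mathcal C$.
   Context: $[q]=\{1,\dots,q\}$. For $\mathbf u,\mathbf v\in[q]^n$, the insdel distance $d_I(\mathbf u,\mathbf v)$ is the minimum number of insertions and deletions transforming $\mathbf u$ into $\mathbf v$; equivalently $d_I(\mathbf u,\mathbf v)=2n-2\ell_{\rm LCS}(\mathbf u,\mathbf v)$ where $\ell_{\rm LCS}$ is the length of a longest common subsequence. *)

(* Defs.v *)
From mathcomp Require Import all_boot all_order all_algebra.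
Set Implicit Arguments. Unset Strict Implicit. Unset Printing Implicit Defensive.

(* Words over [q] = {1..q} are represented as n-tuples over 'I_q = {0..q-1}. *)

(* Length of a longest common subsequence of u and v: the maximum size of a
   subsequence of u (every subsequence of u is mask m u for some bit mask m of
   length size u) that is also a subsequence of v. *)
Definition lcs_len {T : eqType} (u v : seq T) : nat :=
  \max_(m : (size u).-tuple bool)
     (if subseq (mask m u) v then size (mask m u) else 0).

Definition insdel_dist {T : eqType} (u v : seq T) : nat :=
  size u + size v - 2 * lcs_len u v.

(* Main.v *)
Require Import Defs.
From mathcomp Require Import all_boot all_order all_algebra all_field.
From mathcomp Require Import zify.
Import GRing.Theory Num.Theory.
Set Implicit Arguments. Unset Strict Implicit.
Local Open Scope ring_scope.

Lemma subseq_perm_cat (T : eqType) (s t : seq T) :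
  subseq s t -> exists r, perm_eq t (s ++ r).
Proof.
elim: t s => [|y t IH] s.
  by rewrite subseq0 => /eqP ->; exists [::].
case: s => [|x s] /=.
  by move=> _; exists (y :: t).
case: eqP => [-> /IH [r Hr]|_ /IH [r Hr]].
  by exists r; rewrite /= perm_cons.
exists (y :: r).
apply: (@perm_trans _ (y :: (x :: s) ++ r)); first by rewrite perm_cons.
by rewrite -cat1s perm_catCA.
Qed.

Definition Qp (F : fieldType) (q : nat) (phi : 'I_q -> F) (s : seq 'I_q) : {poly F} :=
  \prod_(y <- map phi s) ('X - y%:P).

Lemma Qp_perm (F : fieldType) q (phi : 'I_q -> F) s t :
  perm_eq s t -> Qp phi s = Qp phi t.
Proof. by move=> H; apply: perm_big; apply: perm_map. Qed.

Lemma Qp_cat (F : fieldType) q (phi : 'I_q -> F) s t :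
  Qp phi (s ++ t) = Qp phi s * Qp phi t.
Proof. by rewrite /Qp map_cat big_cat. Qed.

Lemma Qp_monic (F : fieldType) q (phi : 'I_q -> F) s : Qp phi s \is monic.
Proof. exact: monic_prod_XsubC. Qed.

Lemma Qp_size (F : fieldType) q (phi : 'I_q -> F) s : size (Qp phi s) = (size s).+1.
Proof. by rewrite /Qp size_prod_XsubC size_map. Qed.

Lemma key_perm (F : fieldType) q (phi : 'I_q -> F) (d : nat) u v w r1 r2 :
  injective phi -> (forall i, phi i != 0) ->
  perm_eq u (w ++ r1) -> perm_eq v (w ++ r2) -> size r1 = size r2 ->
  (size r1 <= d)%N -> Qp phi u %% 'X^d = Qp phi v %% 'X^d -> perm_eq u v.
Proof.
move=> phiI phi0 Hu Hv Hs Hd Hm.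
have Eu := Qp_perm phi Hu; have Ev := Qp_perm phi Hv.
rewrite Qp_cat in Eu; rewrite Qp_cat in Ev.
have Hdiv : 'X^d %| Qp phi w * (Qp phi r1 - Qp phi r2).
  apply/modp_eq0P; rewrite mulrBr -Eu -Ev modpD modpN Hm subrr //.
have cop : coprimep ('X^d) (Qp phi w).
  apply: coprimep_expl; rewrite coprimep_sym.
  have -> : ('X : {poly F}) = 'X - 0%:P by rewrite subr0.
  rewrite coprimep_XsubC /Qp root_prod_XsubC.
  apply/negP => /mapP [i _ /esym]; exact/eqP/phi0.
rewrite (Gauss_dvdpr _ cop) in Hdiv.
have Hsz : (size (Qp phi r1 - Qp phi r2)%R <= size r1)%N.
  apply/leq_sizeP => j Hj; rewrite coefB.
  rewrite leq_eqVlt in Hj; case/orP: Hj => [/eqP <-|Hlt]; last first.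
    rewrite !nth_default ?subrr // Qp_size -?Hs //.
  have /monicP := Qp_monic phi r1; have /monicP := Qp_monic phi r2.
  by rewrite /lead_coef !Qp_size Hs /= => -> ->; rewrite subrr.
have E12 : Qp phi r1 = Qp phi r2.
  apply/eqP; rewrite -subr_eq0; apply/negPn/negP => Hne.
  have := dvdp_leq Hne Hdiv; rewrite size_polyXn.
  by move=> H; have := leq_trans (leq_trans H Hsz) Hd; rewrite ltnn.
apply: (perm_map_inj phiI); apply: prod_XsubC_eq.
by rewrite -!/(Qp phi _) Eu Ev E12.
Qed.

Lemma dist_lemma (F : fieldType) q (phi : 'I_q -> F) (n delta : nat) (u v : n.-tuple 'I_q) :
  injective phi -> (forall i, phi i != 0) -> (2 <= delta)%N -> (delta <= n)%N ->
  sorted leq (map val u) -> sorted leq (map val v) -> u != v ->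
  Qp phi u %% 'X^(delta.-1) = Qp phi v %% 'X^(delta.-1) ->
  (2 * delta <= insdel_dist u v)%N.
Proof.
move=> phiI phi0 Hd2 Hdn su sv uv Hm.
suff Hl : (lcs_len u v <= n - delta)%N.
  rewrite /insdel_dist !size_tuple; lia.
apply/bigmax_leqP => m _.
case: ifP => // Hsub.
move: (mask_subseq m u) Hsub; move: (mask m u) => w Hwu Hsub.
rewrite leqNgt; apply/negP => Hlt.
have [r1 Hr1] := subseq_perm_cat Hwu.
have [r2 Hr2] := subseq_perm_cat Hsub.
have s1 := perm_size Hr1; have s2 := perm_size Hr2.
rewrite size_cat in s1; rewrite size_cat in s2.
have nu := size_tuple u; have nv := size_tuple v.
have Hp : perm_eq u v.
  apply: (key_perm (d := delta.-1) phiI phi0 Hr1 Hr2) => //; move: s1 s2 Hlt; rewrite nu nv; lia.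
have leT_tr : transitive (fun x y : 'I_q => (x <= y)%N).
  by move=> x y z; apply: leq_trans.
have leT_as : antisymmetric (fun x y : 'I_q => (x <= y)%N).
  by move=> x y H; apply/val_inj/anti_leq.
rewrite sorted_map in su; rewrite sorted_map in sv.
have := sorted_eq leT_tr leT_as su sv Hp => /val_inj E.
by rewrite E eqxx in uv.
Qed.

Lemma exp_mono (m k e : nat) : (m <= k)%N -> (m ^ e <= k ^ e)%N.
Proof. by move=> H; elim: e => // e IH; rewrite !expnS leq_mul. Qed.

Theorem theorem4p5 (q n delta : nat) :
  (2 <= q)%N -> (2 <= delta)%N -> (delta <= n)%N ->
  exists C : {set n.-tuple 'I_q},
    ('C(n + q - 1, n)%:R / ((2 * q + 2) ^ (delta - 2) * (2 * q + 1))%:R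
       <= (#|C|%:R : rat))
    /\ (forall u v : n.-tuple 'I_q, u \in C -> v \in C -> u != v ->
          (2 * delta <= insdel_dist u v)%N).
Proof.
case: q => [//|q'] q2 d2 dn.
set q := q'.+1.
have pr2 : prime 2 by [].
have [F _ cardF] := pPrimePowerField pr2 (ltn0Sn (trunc_log 2 q)).
have Hk1 : (q < 2 ^ (trunc_log 2 q).+1)%N := trunc_log_ltn q (isT : 1 < 2)%N.
have Hk2 : (2 ^ (trunc_log 2 q).+1 <= 2 * q)%N by rewrite expnS leq_mul2l trunc_logP.
have hq : (q <= #|predC1 (0:F)%R|)%N by rewrite cardC1 cardF; lia.
pose phi (i : 'I_q) : F := enum_val (widen_ord hq i).
have phiI : injective phi.
  by move=> i j /enum_val_inj /(congr1 val) /= H; apply: val_inj.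
have phi0 : forall i, phi i != 0.
  by move=> i; have := enum_valP (widen_ord hq i).
pose d := delta.-1.
pose h (u : n.-tuple 'I_q) : {ffun 'I_d -> F} := [ffun i : 'I_d => (Qp phi u %% 'X^d)`_i].
pose S := [set t : n.-tuple 'I_q | sorted leq (map val t)].
pose c r := #|[set t in S | h t == r]|.
case: (@arg_maxnP _ [ffun => 0] xpredT c isT) => r _ Hr.
exists [set t in S | h t == r].
split.
  have HS : #|S| = 'C(n + q - 1, n).
    rewrite /S card_sorted_tuples; congr 'C(_, _); rewrite /q; lia.
  have Hsum : (#|S| <= #|{ffun 'I_d -> F}| * c r)%N.
    rewrite -sum1_card (partition_big h xpredT) //=.
    apply: leq_trans (_ : (\sum_(j : {ffun 'I_d -> F}) c r <= _)%N).
      apply: leq_sum => j _; rewrite sum1_card.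
      apply: leq_trans (Hr j isT); apply: eq_leq; apply: eq_card => t.
      by rewrite [RHS]inE.
    by rewrite sum_nat_const.
  have Hcard : (#|{ffun 'I_d -> F}| <= (2 * q + 2) ^ (delta - 2) * (2 * q + 1))%N.
    rewrite card_ffun card_ord cardF.
    have -> : d = (delta - 2).+1 by rewrite /d; lia.
    rewrite expnSr leq_mul //; last by lia.
    by apply: exp_mono; lia.
  have Dpos : (0 < (2 * q + 2) ^ (delta - 2) * (2 * q + 1))%N.
    by rewrite muln_gt0 expn_gt0; lia.
  rewrite ler_pdivrMr ?ltr0n // -natrM ler_nat -HS.
  apply: (leq_trans Hsum); rewrite mulnC leq_mul2l; apply/orP; right.
  apply: leq_trans Hcard; apply: eq_leq.
  by rewrite /c.
move=> u v; rewrite !inE => /andP [su /eqP hu] /andP [sv /eqP hv] uv.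
apply: (dist_lemma phiI phi0 d2 dn su sv uv).
apply/polyP => i.
have Xn0 : ('X^d : {poly F}) != 0 by rewrite monic_neq0 ?monicXn.
case: (ltnP i d) => hi.
  have := congr1 (fun f : {ffun 'I_d -> F} => f (Ordinal hi)) hu.
  have := congr1 (fun f : {ffun 'I_d -> F} => f (Ordinal hi)) hv.
  by rewrite !ffunE /= => -> ->.
rewrite !nth_default //.
  by have := ltn_modpN0 (Qp phi v) Xn0; rewrite size_polyXn ltnS => H; apply: leq_trans H hi.
by have := ltn_modpN0 (Qp phi u) Xn0; rewrite size_polyXn ltnS => H; apply: leq_trans H hi.
Qed.
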